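(* Let $\alpha\ge1$. If all valuation functions are symmetric submodular and every item cost function $c_j$ is non-decreasing and $\alpha$-average-decreasing, then IACSM is $\alpha$-budget-balanced: its output $(A,p)$ satisfies $\sum_{j\in M}c_j(T_j)\le\sum_{i\in N}p_i\le\alpha\sum_{j\in M}c_j(T_j)$, where $T_j=\{i: j\in A_i\}$.
   Context: Players $N=\{1,\dots,n\}$, items $M=\{1,\dots,m\}$, non-decreasing valuations $v_i:2^M\to\mathbb{R}_{\ge0}$; symmetric: $f(S)=f(T)$ whenever $|S|=|T|$; submodular: $f(S\cup\{x\})-f(S)\ge f(T\cup\{x\})-f(T)$ for $S\subseteq T$, $x\notin T$. A cost function $c:2^N\to\mathbb{R}_{\ge0}$ is $\alpha$-average-decreasing if $\alpha\frac{c(S)}{|S|}\ge\frac{c(T)}{|T|}$ for all nonempty $S\subseteq T\subseteq N$. Mechanism IACSM (input: declared valuations $b$): maintain active set $X=N$, sets $T_j=N$ and cost shares $\chi_j=c_j(N)/n$ for all items $j$. While $X\neq\emptyset$: (1) every $i\in X$ computes $A_i\in\arg\max_{S\subseteq M}\{b_i(S)-\sum_{j\in S}\chi_j\}$, choosing among maximizers one of maximum cardinality $k$, and among those the $k$ items with smallest current $\chi_j$ (item ties by index); (2) choose $i^*\in X$ with $|A_{i^*}|$ minimum (ties by smallest index); (3) assign $A_{i^*}$ to $i^*$ permanently and remove $i^*$ from $X$; (4) for every item $j\notin A_{i^*}$ set $T_j:=T_j\setminus\{i^*\}$ and, if $T_j\ne\emptyset$, set $\chi_j:=\max\{\chi_j,c_j(T_j)/|T_j|\}$.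 Output the assigned bundles and payments $p_i=\sum_{j\in A_i}\chi_j$ with final cost shares. *)

(* Defs.v *)
From HB Require Import structures.
From mathcomp Require Import all_boot all_order all_algebra.
Set Implicit Arguments. Unset Strict Implicit. Unset Printing Implicit Defensive.
Import Order.TTheory GRing.Theory Num.Theory.
Local Open Scope ring_scope.

Section IACSM.
Variables (R : realFieldType) (n m : nat).
(* Players N = 'I_n, items M = 'I_m. *)
Variable b : 'I_n -> {set 'I_m} -> R.
Variable c : 'I_m -> {set 'I_n} -> R.

Record state := State {
  st_X : {set 'I_n};
  st_T : {ffun 'I_m -> {set 'I_n}};
  st_chi : {ffun 'I_m -> R};
  st_A : {ffun 'I_n -> {set 'I_m}} }.

Definition utility (chi : 'I_m -> R) (i : 'I_n) (S : {set 'I_m}) : R :=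
  b i S - \sum_(j in S) chi j.

Definition is_maximizer chi i (S : {set 'I_m}) : bool :=
  [forall S' : {set 'I_m}, utility chi i S' <= utility chi i S].

Definition max_card chi i : nat :=
  \max_(S : {set 'I_m} | is_maximizer chi i S) #|S|.

Definition item_before (chi : 'I_m -> R) (j' j : 'I_m) : bool :=
  (chi j' < chi j) || ((chi j' == chi j) && (j' < j)%N).

Definition k_cheapest chi (k : nat) : {set 'I_m} :=
  [set j | (#|[set j' | item_before chi j' j]| < k)%N].

(* demanded bundle A_i: among maximizers, one of maximum cardinality k,
   namely the k items with smallest chi_j.  (For symmetric valuations this
   set is always a maximizer; the fallback branch is only for totality.) *)
Definition demand chi i : {set 'I_m} :=
  let k := max_card chi i in
  if is_maximizer chi i (k_cheapest chi k) then k_cheapest chi k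
  else odflt set0 [pick S | is_maximizer chi i S && (#|S| == k)].

Definition chosen (X : {set 'I_n}) (D : 'I_n -> {set 'I_m}) : option 'I_n :=
  [pick i in X | [forall i' in X,
      (#|D i| < #|D i'|)%N || ((#|D i| == #|D i'|) && (i <= i')%N)]].

Definition step (s : state) : state :=
  let D := demand (st_chi s) in
  match chosen (st_X s) D with
  | None => s
  | Some istar =>
    let Ai := D istar in
    let T' := [ffun j => if j \in Ai then st_T s j else st_T s j :\ istar] in
    let chi' := [ffun j =>
       if (j \notin Ai) && (T' j != set0)
       then Num.max (st_chi s j) (c j (T' j) / #|T' j|%:R)
       else st_chi s j] in
    State (st_X s :\ istar) T' chi'
          [ffun i => if i == istar then Ai else st_A s i]
  end.

Definition init_state : state :=
  State [set: 'I_n] [ffun _ => [set: 'I_n]]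
        [ffun j => c j [set: 'I_n] / n%:R] [ffun _ => set0].

(* while X <> set0: each round removes one player, so n rounds suffice;
   step is the identity once X is empty. *)
Definition final_state : state := iter n step init_state.

Definition IACSM_alloc : 'I_n -> {set 'I_m} := st_A final_state.
Definition IACSM_pay (i : 'I_n) : R :=
  \sum_(j in st_A final_state i) st_chi final_state j.

End IACSM.

Definition symmetric_fun {T : finType} {R : realFieldType} (f : {set T} -> R) :=
  forall S U : {set T}, #|S| = #|U| -> f S = f U.
Definition submodular_fun {T : finType} {R : realFieldType} (f : {set T} -> R) :=
  forall (S U : {set T}) (x : T), S \subset U -> x \notin U ->
    f (x |: U) - f U <= f (x |: S) - f S.
Definition nondecreasing_fun {T : finType} {R : realFieldType} (f : {set T} -> R) :=
  forall S U : {set T}, S \subset U -> f S <= f U.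
Definition nonneg_fun {T : finType} {R : realFieldType} (f : {set T} -> R) :=
  forall S : {set T}, 0 <= f S.
Definition avg_decreasing {T : finType} {R : realFieldType} (alpha : R)
  (f : {set T} -> R) :=
  forall S U : {set T}, S != set0 -> S \subset U ->
    f U / #|U|%:R <= alpha * (f S / #|S|%:R).

(* Main.v *)
Require Import Defs.
From HB Require Import structures.
From mathcomp Require Import all_boot all_order all_algebra.
From mathcomp Require Import zify ring lra.
Import Order.TTheory GRing.Theory Num.Theory.
Local Open Scope ring_scope.

Section Proof.
Variables (R : realFieldType) (n m : nat) (alpha : R).
Variables (b : 'I_n -> {set 'I_m} -> R) (c : 'I_m -> {set 'I_n} -> R).
Hypothesis c0 : forall j, c j set0 = 0.
Hypothesis cad : forall j, avg_decreasing alpha (c j).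

Definition Inv (s : state R n m) :=
  [/\ forall j i, (i \in st_T s j) = (if i \in st_X s then true else j \in st_A s i),
      forall j, st_T s j != set0 -> c j (st_T s j) / #|st_T s j|%:R <= st_chi s j &
      forall j S, S != set0 -> S \subset st_T s j ->
         st_chi s j <= alpha * (c j S / #|S|%:R)].

Lemma Inv_init : Inv (init_state c).
Proof.
split => [j i|j|j S HS HST]; rewrite /init_state /= ?ffunE ?in_setT //.
  by rewrite cardsT card_ord.
have := @cad j S setT HS (subsetT S); by rewrite cardsT card_ord.
Qed.

Lemma chosen_Some (X : {set 'I_n}) (D : 'I_n -> {set 'I_m}) :
  X != set0 -> exists i, chosen X D = Some i.
Proof.
case/set0Pn => i0 Hi0.
rewrite /chosen; case: pickP => [i _|Hn]; first by exists i.
exfalso.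
have [i Hi Hmin] := @arg_minnP _ i0 (mem X) (fun i => #|D i| * n + i)%N Hi0.
have {}Hi : i \in X by []. have {}Hmin : forall j, j \in X -> (#|D i| * n + i <= #|D j| * n + j)%N by []. move: (Hn i); rewrite /= Hi /=; move/negP; apply.
apply/forallP => i'; apply/implyP => Hi'.
have := Hmin i' Hi'.
have := ltn_ord i; have := ltn_ord i'.
move: (#|D i|) (#|D i'|) (nat_of_ord i) (nat_of_ord i') => a a' x x' H1 H2 H3.
case: (ltngtP a a') => //= Haa'.
  exfalso; nia.
subst a'; lia.
Qed.

Lemma Inv_step s : Inv s -> Inv (step b c s).
Proof.
case=> H1 H2 H3; rewrite /step /chosen.
case: pickP => [istar /andP [Hx _]|_] //.
set Ai := demand _ _ _.
split => [j i|j|j S HS HST] /=; rewrite !ffunE.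
- rewrite in_setD1; case: (eqVneq i istar) => [->|Hne] /=.
  + case: (boolP (j \in Ai)) => Hj; first by rewrite H1 Hx.
    by rewrite in_setD1 eqxx.
  + by case: (j \in Ai); rewrite ?in_setD1 ?Hne /= H1.
- case: (boolP (j \in Ai)) => Hj /=; first exact: H2.
  move=> Hne; rewrite Hne le_max; apply/orP; right; exact: lexx.
- case: (boolP (j \in Ai)) => Hj /=; first by move: HST; rewrite ?ffunE ?Hj; exact: H3.
  move: HST; rewrite ?ffunE ?(negbTE Hj) => HST.
  have Hne : st_T s j :\ istar != set0.
    apply: contra HS => /eqP E; rewrite -subset0 -E; exact: HST.
  rewrite Hne /= ge_max; apply/andP; split.
    apply: H3 => //; apply: subset_trans HST _; exact: subD1set.
  exact: cad.
Qed.

Lemma iter_props k : Inv (iter k (step b c) (init_state c)) /\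
  (#|st_X (iter k (step b c) (init_state c))| <= n - k)%N.
Proof.
elim: k => [|k [HI Hc]] /=.
  by split; [exact: Inv_init| rewrite /init_state /= cardsT card_ord subn0].
split; first exact: Inv_step.
set s := iter k _ _ in HI Hc *.
case: (eqVneq (st_X s) set0) => HX.
  rewrite /step /chosen; case: pickP => [i /andP[]|]; first by rewrite HX in_set0.
  by rewrite HX cards0.
have [i Hi] := chosen_Some (st_X s) (demand b (st_chi s)) HX.
rewrite /step Hi /=.
have Hin : i \in st_X s by move: Hi; rewrite /chosen; case: pickP => // i' /andP[? _] [<-].
have := cardsD1 i (st_X s); rewrite Hin add1n => E.
move: Hc; rewrite E; move: (#|_ :\ i|) => x; lia.
Qed.

End Proof.

Theorem mainTheorem8 (R : realFieldType) (n m : nat) (alpha : R)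
  (b : 'I_n -> {set 'I_m} -> R) (c : 'I_m -> {set 'I_n} -> R) :
  1 <= alpha ->
  (forall i, nonneg_fun (b i)) ->
  (forall i, nondecreasing_fun (b i)) ->
  (forall i, symmetric_fun (b i)) ->
  (forall i, submodular_fun (b i)) ->
  (forall j, nonneg_fun (c j)) ->
  (forall j, c j set0 = 0) ->
  (forall j, nondecreasing_fun (c j)) ->
  (forall j, avg_decreasing alpha (c j)) ->
  let A := IACSM_alloc b c in
  let p := IACSM_pay b c in
  let T := fun j : 'I_m => [set i | j \in A i] in
  \sum_(j < m) c j (T j) <= \sum_(i < n) p i /\
  \sum_(i < n) p i <= alpha * \sum_(j < m) c j (T j).
Proof.
move=> _ _ _ _ _ _ c0 _ cad A p T.
have [[H1 H2 H3] Hc] := @iter_props _ _ _ _ b c cad n.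
rewrite subnn leqn0 cards_eq0 in Hc.
set s := iter n _ _ in H1 H2 H3 Hc.
have HT : forall j, T j = st_T s j.
  move=> j; apply/setP => i; rewrite H1 (eqP Hc) in_set0 /T in_set.
  by [].
have Hp : \sum_(i < n) p i = \sum_(j < m) #|T j|%:R * st_chi s j.
  rewrite /p /IACSM_pay -/s.
  rewrite (eq_bigr (fun i => \sum_j (if j \in st_A s i then st_chi s j else 0)));
    last by move=> i _; rewrite big_mkcond.
  rewrite exchange_big /=; apply: eq_bigr => j _.
  rewrite -big_mkcond /= sumr_const mulr_natl; congr (_ *+ _).
  by apply: eq_card => i; rewrite /T /A /IACSM_alloc -/s !inE.
rewrite Hp mulr_sumr; split; apply: ler_sum => j _; rewrite HT.
- case: (eqVneq (st_T s j) set0) => [->|Hne]; first by rewrite c0 cards0 mul0r.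
  have Hpos : 0 < #|st_T s j|%:R :> R by rewrite ltr0n card_gt0.
  by rewrite mulrC -ler_pdivrMr // H2.
- case: (eqVneq (st_T s j) set0) => [->|Hne]; first by rewrite c0 cards0 mul0r mulr0.
  have Hpos : 0 < #|st_T s j|%:R :> R by rewrite ltr0n card_gt0.
  rewrite mulrC -ler_pdivlMr // -mulrA.
  exact: H3.
Qed.
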